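(* Let $y\in\mathbb{R}$, $\beta>0$, and let $f$ be a function that is ordinal decreasing on $D=(y,y+\beta)$ and satisfies $f(x)>0$ for all $x\in D$. Then there exists $\varepsilon$ with $0<\varepsilon<\beta$ such that $x-f(x)<y$ for every $x$ with $y<x<y+\varepsilon$.
   Context: For $h:D\to\mathbb{R}$, a strictly decreasing sequence $x_1>x_2>\cdots$ in $D$ is $h$-bad if $h(x_1)>h(x_2)>\cdots$; $h$ is ordinal decreasing on $D$ if there is no infinite $h$-bad sequence in $D$. *)

(* Defs.v *)
From Stdlib Require Import Reals.
Open Scope R_scope.

Definition bad_seq (h : R -> R) (D : R -> Prop) (s : nat -> R) : Prop :=
  (forall n, D (s n)) /\
  (forall n, s (S n) < s n) /\
  (forall n, h (s (S n)) < h (s n)).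

Definition ordinal_decreasing (h : R -> R) (D : R -> Prop) : Prop :=
  ~ (exists s : nat -> R, bad_seq h D s).

(* Main.v *)
Require Import Defs.
From Stdlib Require Import Reals Lra Classical ClassicalEpsilon.
Open Scope R_scope.

Theorem lemma5 (y beta : R) (f : R -> R) :
  0 < beta ->
  ordinal_decreasing f (fun x => y < x < y + beta) ->
  (forall x, y < x < y + beta -> 0 < f x) ->
  exists eps, 0 < eps < beta /\
    forall x, y < x < y + eps -> x - f x < y.
Proof.
  intros Hb Hod Hpos.
  apply NNPP; intro Hn.
  assert (H : forall eps, exists x, 0 < eps < beta -> y < x < y + eps /\ y <= x - f x).
  { intro eps. destruct (classic (0 < eps < beta)) as [He|He].
    - apply NNPP; intro Hx. apply Hn. exists eps. split; [exact He|].
      intros x Hx1. apply Rnot_le_lt. intro Hle. apply Hx. exists x. intros _. split; lra.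
    - exists 0. intro; contradiction. }
  set (g := fun eps => proj1_sig (constructive_indefinite_description _ (H eps))).
  assert (Hg : forall eps, 0 < eps < beta -> y < g eps < y + eps /\ y <= g eps - f (g eps)).
  { intro eps. unfold g. destruct (constructive_indefinite_description _ (H eps)); simpl; auto. }
  set (s := fix s n := match n with O => g (beta/2) | S m => g (Rmin (s m - y) (f (s m))) end).
  assert (Hinv : forall n, y < s n < y + beta /\ y <= s n - f (s n)).
  { induction n as [|n IH].
    - simpl. destruct (Hg (beta/2)) as [A B]; [lra|]. split; lra.
    - change (s (S n)) with (g (Rmin (s n - y) (f (s n)))).
      pose proof (Hpos _ (proj1 IH)).
      pose proof (Rmin_l (s n - y) (f (s n))).
      assert (0 < Rmin (s n - y) (f (s n))) by (apply Rmin_glb_lt; lra).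
      destruct (Hg (Rmin (s n - y) (f (s n)))) as [A B]; [lra|]. split; lra. }
  apply Hod. exists s. split; [|split]; intro n.
  - apply Hinv.
  - change (s (S n)) with (g (Rmin (s n - y) (f (s n)))).
    destruct (Hinv n) as [IH1 IH2].
    pose proof (Hpos _ IH1).
    pose proof (Rmin_l (s n - y) (f (s n))).
    assert (0 < Rmin (s n - y) (f (s n))) by (apply Rmin_glb_lt; lra).
    destruct (Hg (Rmin (s n - y) (f (s n)))) as [A B]; lra.
  - change (s (S n)) with (g (Rmin (s n - y) (f (s n)))).
    destruct (Hinv n) as [IH1 IH2].
    pose proof (Hpos _ IH1).
    pose proof (Rmin_l (s n - y) (f (s n))).
    pose proof (Rmin_r (s n - y) (f (s n))).
    assert (0 < Rmin (s n - y) (f (s n))) by (apply Rmin_glb_lt; lra).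
    destruct (Hg (Rmin (s n - y) (f (s n)))) as [A B]; lra.
Qed.
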